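(* Let $p:\mathbb{N}\to[0,1]$ satisfy density ($p(n)\to\tilde p>0$), root growth ($p(n)=Kn^{-\beta}$, $K>0$, $0<\beta<1$) or logarithmic growth ($p(n)=K\log(n)/n$, $K>0$). Then for every $k\in\mathbb{N}$ and every $\epsilon,\delta,\theta>0$ there is $N\in\mathbb{N}$ such that for all $n\ge N$, with probability at least $1-\theta$ over $G\sim\mathrm{ER}(n,p(n))$, the proportion of nodes $v$ with $\|\mathrm{rw}_k(v)\|<\epsilon$ is at least $1-\delta$.
   Context: $\mathrm{ER}(n,p)$ is the Erdős–Rényi random graph. For a node $v$, $\mathrm{rw}_k(v)\in\mathbb{R}^k$ is the vector whose $j$-th entry ($1\le j\le k$) is the probability that a simple random walk of $j$ steps started at $v$ is at $v$ after $j$ steps ($\mathrm{rw}_k(v)=0$ if $v$ is isolated). *)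

(* Defs.v *)
From HB Require Import structures.
From mathcomp Require Import all_boot all_order all_algebra.
From mathcomp Require Import all_classical all_reals all_analysis.
Set Implicit Arguments. Unset Strict Implicit. Unset Printing Implicit Defensive.
Import Order.TTheory GRing.Theory Num.Theory.
Import numFieldNormedType.Exports.
Local Open Scope classical_set_scope.
Local Open Scope ring_scope.

Definition graph (n : nat) := {set ('I_n * 'I_n)}.

Definition simple_graph (n : nat) (E : graph n) : bool :=
  [forall u : 'I_n, forall v : 'I_n, ((u, v) \in E) == ((v, u) \in E)]
  && [forall u : 'I_n, (u, u) \notin E].

Definition adj (n : nat) (E : graph n) (u v : 'I_n) : bool := (u, v) \in E.

Definition deg (n : nat) (E : graph n) (u : 'I_n) : nat := #|[set v | adj E u v]|.

Definition isolated (n : nat) (E : graph n) (u : 'I_n) : bool := deg E u == 0%N.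

(* Erdos-Renyi probability weight of a simple graph E in ER(n,q):
   each unordered pair {u,v} (u < v) is an edge independently with prob. q. *)
Definition er_weight (R : realType) (n : nat) (q : R) (E : graph n) : R :=
  \prod_(u : 'I_n) \prod_(v : 'I_n | (u < v)%N) (if adj E u v then q else 1 - q).

Definition er_prob (R : realType) (n : nat) (q : R) (P : pred (graph n)) : R :=
  \sum_(E : graph n | simple_graph E && P E) er_weight q E.

Definition trans (R : realType) (n : nat) (E : graph n) (u w : 'I_n) : R :=
  if adj E u w then (deg E u)%:R^-1 else 0.

Fixpoint walkprob (R : realType) (n : nat) (E : graph n) (j : nat) (v w : 'I_n) : R :=
  match j with
  | 0%N => if v == w then 1 else 0
  | j'.+1 => \sum_(u : 'I_n) walkprob R E j' v u * trans R E u w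
  end.

(* rw_k(v) in R^k, as a function of the index j in {1,...,k} (stored at 'I_k index j-1);
   rw_k(v) = 0 if v is isolated. *)
Definition rw (R : realType) (n k : nat) (E : graph n) (v : 'I_n) (i : 'I_k) : R :=
  if isolated E v then 0 else walkprob R E i.+1 v v.

Definition rw_norm (R : realType) (n k : nat) (E : graph n) (v : 'I_n) : R :=
  Num.sqrt (\sum_(i : 'I_k) (@rw R n k E v i) ^+ 2).

Definition small_rw_proportion (R : realType) (n k : nat) (eps : R) (E : graph n) : R :=
  #|[set v : 'I_n | @rw_norm R n k E v < eps]|%:R / n%:R.

Definition density_regime (R : realType) (p : nat -> R) : Prop :=
  exists pt : R, 0 < pt /\ p @ \oo --> pt.

Definition root_regime (R : realType) (p : nat -> R) : Prop :=
  exists K beta : R, 0 < K /\ 0 < beta /\ beta < 1 /\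
    \forall n \near \oo, p n = K * powR (n%:R) (- beta).

Definition log_regime (R : realType) (p : nat -> R) : Prop :=
  exists K : R, 0 < K /\ \forall n \near \oo, p n = K * ln (n%:R) / n%:R.

(* Main.v *)
Require Import Defs.
From HB Require Import structures.
From mathcomp Require Import all_boot all_order all_algebra.
From mathcomp Require Import all_classical all_reals all_analysis.
From mathcomp Require Import ring lra.
Import Order.TTheory GRing.Theory Num.Theory.
Local Open Scope ring_scope.
Set Implicit Arguments. Unset Strict Implicit.

Notation P2 n := (prod (ordinal n) (ordinal n)).
Definition swp {n : nat} (x : 'I_n * 'I_n) : 'I_n * 'I_n := (x.2, x.1).

Lemma swp_inj n : injective (@swp n).
Proof. by case=> a b [c d] [-> ->]. Qed.

Lemma prod_split (R : comPzRingType) n (g : 'I_n * 'I_n -> R) :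
  \prod_x g x = \prod_(x : P2 n | (x.1 < x.2)%N) (g x * g (swp x)) * \prod_(x : P2 n | x.1 == x.2) g x.
Proof.
rewrite (bigID (fun x : P2 n => (x.1 < x.2)%N)) /=.
rewrite (bigID (fun x : P2 n => (x.2 < x.1)%N) (fun x : P2 n => ~~ (x.1 < x.2)%N)) /=.
rewrite mulrA big_split /=; congr (_ * _ * _).
  rewrite (reindex_inj (@swp_inj n)) /=; apply: eq_bigl => -[a b] /=.
  by case: ltngtP.
apply: eq_bigl => -[a b] /=; rewrite -val_eqE /=; by case: ltngtP.
Qed.

Definition upb {n} (x : P2 n) : bool := (x.1 < x.2)%N.
Definition tob {n} (E : graph n) : {ffun P2 n -> bool} := [ffun x => upb x && (x \in E)].
Definition symg {n} (b : {ffun P2 n -> bool}) : graph n :=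
  [set x | (upb x && b x) || (upb (swp x) && b (swp x))].

Lemma upb_swp n (x : P2 n) : upb x -> upb (swp x) = false.
Proof. by case: x => a b; rewrite /upb /swp /= => h; apply/negbTE; rewrite -leqNgt ltnW. Qed.

Lemma tob_symg n (b : {ffun P2 n -> bool}) :
  [forall x, ~~ upb x ==> ~~ b x] -> tob (symg b) = b.
Proof.
move=> /forallP Hb; apply/ffunP => x; rewrite !ffunE inE.
case ux: (upb x) => /=; first by rewrite (upb_swp ux) /= orbF.
by have := Hb x; rewrite ux /= => /negbTE ->.
Qed.

Lemma symg_tob n (E : graph n) : (symg (tob E) == E) = simple_graph E.
Proof.
apply/eqP/idP.
  move/setP => h.
  have key : forall x, (x \in E) = (upb x && (x \in E)) || (upb (swp x) && (swp x \in E)).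
    by move=> x; rewrite -[LHS]h inE !ffunE !andbA !andbb.
  apply/andP; split.
    apply/forallP => u; apply/forallP => v.
    move: (key (u, v)) (key (v, u)); rewrite /upb /swp /=.
    case: ltngtP => hh; rewrite /= ?orbF => ha hb; apply/eqP => //.
    by rewrite ha hb.
  by apply/forallP => u; rewrite (key (u, u)) /upb /swp /= ltnn.
case/andP => /forallP hs /forallP hi.
apply/setP => -[a b]; rewrite inE !ffunE /upb /swp /=.
have := hs a; move/forallP/(_ b)/eqP => sab.
rewrite -sab.
case: (ltngtP a b) => hh /=; rewrite ?orbF //.
have ab : a = b by apply: val_inj.
by rewrite ab; move: (hi b) => /negbTE ->.
Qed.

Lemma sum_simple (R : comPzRingType) n (f : P2 n -> bool -> R) :
  \sum_(E : graph n | simple_graph E) \prod_(x : P2 n | upb x) f x (x \in E)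
  = \prod_(x : P2 n | upb x) (f x true + f x false).
Proof.
pose g (x : P2 n) (c : bool) : R := if upb x then f x c else (if c then 0 else 1).
transitivity (\prod_(x : P2 n) \sum_(c : bool) g x c); last first.
  rewrite (bigID upb) /= [X in _ * X]big1 ?mulr1; last first.
    by move=> x /negbTE ux; rewrite big_bool /g ux /= add0r.
  by apply: eq_bigr => x ux; rewrite big_bool /g ux.
rewrite bigA_distr_bigA /=.
rewrite (bigID (fun b : {ffun P2 n -> bool} => [forall x, ~~ upb x ==> ~~ b x])) /=.
rewrite [X in _ = _ + X]big1 ?addr0; last first.
  move=> b /forallPn [x]; rewrite negb_imply negbK => /andP [/negbTE ux bx].
  by rewrite (bigD1 x) //= /g ux bx mul0r.
rewrite (reindex_onto tob symg (@tob_symg n)) /=.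
apply: eq_big.
  move=> E; rewrite symg_tob.
  suff -> : [forall x, ~~ upb x ==> ~~ tob E x] by [].
  by apply/forallP => x; rewrite ffunE; apply/implyP => /negbTE ->.
move=> E _; rewrite [RHS](bigID upb) /= [X in _ = _ * X]big1 ?mulr1; last first.
  by move=> x /negbTE ux; rewrite /g ffunE ux.
by apply: eq_bigr => x ux; rewrite /g ffunE ux.
Qed.

Lemma er_weightE (R : realType) n (q : R) (E : graph n) :
  er_weight q E = \prod_(x : P2 n | upb x) (if x \in E then q else 1 - q).
Proof.
rewrite /er_weight pair_big_dep /=; apply: eq_big => -[a b] //.
Qed.

Lemma er_total (R : realType) n (q : R) :
  \sum_(E : graph n | simple_graph E) er_weight q E = 1.
Proof.
under eq_bigr do rewrite er_weightE.
rewrite (sum_simple (fun x c => if c then q else 1 - q)) /=.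
by apply: big1 => x _; rewrite addrC subrK.
Qed.

Definition Yv (R : realType) n (u : 'I_n) (E : graph n) : R :=
  \prod_(x : P2 n) (if (x \in E) && (x.1 == u) then 2^-1 else 1).

Lemma Yv_deg (R : realType) n (u : 'I_n) (E : graph n) :
  Yv R u E = 2^-1 ^+ deg E u.
Proof.
rewrite /Yv.
transitivity (\prod_(i : 'I_n) \prod_(j : 'I_n)
   (if ((i, j) \in E) && (i == u) then (2^-1 : R) else 1)).
  by rewrite pair_bigA; apply: eq_bigr => -[a b].
rewrite (bigD1 u) //= [X in _ * X]big1 ?mulr1; last first.
  by move=> i /negbTE iu; apply: big1 => j _; rewrite iu andbF.
rewrite /deg -prodr_const.
rewrite (eq_bigr (fun j => if adj E u j then (2^-1 : R) else 1)); last first.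
  by move=> j _; rewrite eqxx andbT.
rewrite -big_mkcond /=; apply: eq_bigl => j; by rewrite /in_mem /mem /= /in_set asboolb.
Qed.

Lemma simple_sym n (E : graph n) : simple_graph E -> forall x, (swp x \in E) = (x \in E).
Proof. by case/andP => /forallP hs _ [a b]; move/forallP: (hs a) => /(_ b) /eqP ->. Qed.

Lemma simple_irr n (E : graph n) : simple_graph E -> forall a, (a, a) \notin E.
Proof. by case/andP => _ /forallP. Qed.

Definition phi (R : realType) n (u : 'I_n) (x : P2 n) (c : bool) : R :=
  if c && (x.1 == u) then 2^-1 else 1.

Lemma Yv_split (R : realType) n (u : 'I_n) (E : graph n) : simple_graph E ->
  Yv R u E = \prod_(x : P2 n | upb x) (phi R u x (x \in E) * phi R u (swp x) (x \in E)).
Proof.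
move=> sE; rewrite /Yv (prod_split (fun x : P2 n => phi R u x (x \in E))) /=.
rewrite [X in _ * X]big1 ?mulr1; last first.
  move=> [a b] /= /eqP ab; subst b.
  by rewrite /phi (negbTE (simple_irr sE a)).
by apply: eq_bigr => x _; rewrite simple_sym.
Qed.

Lemma EY (R : realType) n (q : R) (u : 'I_n) :
  \sum_(E : graph n | simple_graph E) er_weight q E * Yv R u E = (1 - q / 2) ^+ n.-1.
Proof.
pose f (x : P2 n) (c : bool) : R := (if c then q else 1 - q) * (phi R u x c * phi R u (swp x) c).
transitivity (\sum_(E : graph n | simple_graph E) \prod_(x : P2 n | upb x) f x (x \in E)).
  by apply: eq_bigr => E sE; rewrite er_weightE Yv_split // -big_split.
rewrite sum_simple /f /=.
pose h (x : P2 n) : R := if (x.1 == u) && (x.2 != u) then 1 - q / 2 else 1.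
transitivity (\prod_(x : P2 n) h x); last first.
  transitivity (\prod_(i : 'I_n) \prod_(j : 'I_n) h (i, j)).
    by rewrite pair_bigA; apply: eq_bigr => -[a b].
  rewrite (bigD1 u) //= [X in _ * X]big1 ?mulr1; last first.
    by move=> i /negbTE iu; apply: big1 => j _; rewrite /h /= iu.
  rewrite (eq_bigr (fun j => if j \in predC1 u then 1 - q / 2 else 1)); last first.
    by move=> j _; rewrite /h /= eqxx.
  by rewrite -big_mkcond /= prodr_const cardC1 card_ord.
rewrite (prod_split h) [X in _ = _ * X]big1 ?mulr1; last first.
  by move=> [a b] /= /eqP ab; subst b; rewrite /h /=; case: eqVneq.
apply: eq_bigr => -[a b]; rewrite /upb /= => ab.
rewrite /phi /h /=.
case: (eqVneq a u) => [au|au]; case: (eqVneq b u) => [bu|bu] /=.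
- by subst; rewrite ltnn in ab.
- lra.
- lra.
- lra.
Qed.

Lemma deg_card n (E : graph n) u : deg E u = #|[pred w | adj E u w]|.
Proof.
rewrite /deg; apply: eq_card => w.
by rewrite /in_mem /mem /= /in_set asboolb.
Qed.

Lemma trans_ge0 (R : realType) n (E : graph n) u w : 0 <= trans R E u w.
Proof. by rewrite /trans; case: ifP => // _; rewrite invr_ge0. Qed.

Lemma trans_sum (R : realType) n (E : graph n) u : \sum_w trans R E u w <= 1.
Proof.
rewrite /trans -big_mkcond /=.
have -> : \sum_(w | adj E u w) ((deg E u)%:R^-1 : R) = \sum_(w in [pred w | adj E u w]) (deg E u)%:R^-1.
  by apply: eq_bigl.
rewrite sumr_const -deg_card.
have -> : forall x : R, x *+ deg E u = x * (deg E u)%:R by move=> x; rewrite mulr_natr.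
case: (posnP (deg E u)) => [->|dp]; first by rewrite mulr0.
by rewrite mulVf // pnatr_eq0 -lt0n.
Qed.

Lemma wp_ge0 (R : realType) n (E : graph n) j v w : 0 <= walkprob R E j v w.
Proof.
elim: j w => [|j IH] w /=; first by case: ifP.
by apply: sumr_ge0 => u _; apply: mulr_ge0 => //; apply: trans_ge0.
Qed.

Lemma wp_sum (R : realType) n (E : graph n) j v : \sum_w walkprob R E j v w <= 1.
Proof.
elim: j => [|j IH] /=.
  rewrite -big_mkcond /= (big_pred1 v) // => i; by rewrite /= eq_sym.
rewrite exchange_big /=.
apply: le_trans IH; apply: ler_sum => u _.
rewrite -mulr_sumr; apply: ler_piMr; first exact: wp_ge0.
exact: trans_sum.
Qed.

Lemma wp_ret (R : realType) n (E : graph n) j v (D : nat) : (0 < D)%N ->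
  (forall u, adj E u v -> (D <= deg E u)%N) ->
  walkprob R E j.+1 v v <= (D%:R)^-1.
Proof.
move=> D0 H /=.
apply: (@le_trans _ _ (\sum_u walkprob R E j v u * (D%:R)^-1)).
  apply: ler_sum => u _; apply: ler_wpM2l; first exact: wp_ge0.
  rewrite /trans; case: ifP => [a|_]; last by rewrite invr_ge0.
  have := H u a => Du.
  rewrite lef_pV2 ?posrE ?ltr0n ?ler_nat //.
  exact: leq_trans Du.
rewrite -mulr_suml; apply: ler_piMl; first by rewrite invr_ge0.
exact: wp_sum.
Qed.

Lemma rw_small (R : realType) n k (E : graph n) v (D : nat) (eps : R) :
  (0 < D)%N -> 0 < eps -> k%:R < eps ^+ 2 * D%:R ->
  (forall u, adj E u v -> (D <= deg E u)%N) -> @rw_norm R n k E v < eps.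
Proof.
move=> D0 e0 hk H.
have Dp : (0 : R) < D%:R by rewrite ltr0n.
rewrite /rw_norm -(ger0_norm (ltW e0)) -sqrtr_sqr ltr_sqrt ?exprn_gt0 //.
apply: (@le_lt_trans _ _ (\sum_(i : 'I_k) (D%:R^-1 : R) ^+ 2)).
  apply: ler_sum => i _; rewrite /rw.
  have h0 : 0 <= (if Defs.isolated E v then 0 else walkprob R E i.+1 v v).
    by case: ifP => // _; apply: wp_ge0.
  have h1 : (if Defs.isolated E v then 0 else walkprob R E i.+1 v v) <= D%:R^-1.
    case: ifP => _; first by rewrite invr_ge0 ltW.
    exact: wp_ret.
  by rewrite !expr2 ler_pM.
rewrite sumr_const card_ord.
have -> : forall x : R, x *+ k = k%:R * x by move=> x; rewrite mulr_natl.
apply: (@le_lt_trans _ _ (k%:R * D%:R^-1)).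
  have hD1 : D%:R^-1 <= 1 :> R by rewrite invf_le1 // ler1n.
  apply: ler_wpM2l => //; rewrite expr2 ler_piMl //.
by rewrite ltr_pdivrMr.
Qed.

Lemma pow2_ge1 (R : realType) (d D : nat) : (d <= D)%N -> 1 <= (2 : R) ^+ D * (2^-1) ^+ d.
Proof.
move=> dD; rewrite -(subnK dD) exprD -mulrA -exprMn mulfV ?pnatr_eq0 // expr1n mulr1.
by apply: exprn_ege1; rewrite ler1n.
Qed.

Lemma Yv_ge0 (R : realType) n u (E : graph n) : 0 <= Yv R u E.
Proof. by rewrite Yv_deg exprn_ge0 // invr_ge0 ler0n. Qed.

Lemma bad_bound (R : realType) n (E : graph n) (D : nat) (A : {pred 'I_n}) :
  (forall v, [forall u, adj E u v ==> (D <= deg E u)%N] -> v \in A) ->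
  n%:R - #|A|%:R <= D%:R * 2 ^+ D * \sum_u Yv R u E :> R.
Proof.
move=> HA.
pose B := [pred v : 'I_n | ~~ [forall u, adj E u v ==> (D <= deg E u)%N]].
have hB : (n - #|A| <= #|B|)%N.
  rewrite -[X in (X - _)%N](card_ord n) -(cardC A) addKn.
  apply: fintype.subset_leq_card; apply/fintype.subsetP => v; rewrite !inE.
  by apply: contraR => /negbNE /HA.
have hA : (#|A| <= n)%N by rewrite -[X in (_ <= X)%N](card_ord n) max_card.
rewrite -natrB // (@le_trans _ _ (#|B|%:R)) ?ler_nat //.
rewrite -sumr_const big_mkcond /=.
apply: (@le_trans _ _ (\sum_(v : 'I_n) \sum_(u : 'I_n)
   (if adj E u v && (deg E u < D)%N then (1 : R) else 0))).
  apply: ler_sum => v _; case: ifP => vB; last first.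
    by apply: sumr_ge0 => u _; case: ifP.
  move: vB; rewrite inE => /forallPn [u]; rewrite negb_imply -ltnNge => hu.
  rewrite (bigD1 u) //= hu lerDl.
  by apply: sumr_ge0 => w _; case: ifP.
rewrite exchange_big /= mulr_sumr; apply: ler_sum => u _.
case: (ltnP (deg E u) D) => hd; last first.
  rewrite big1; last by move=> v _; rewrite andbF.
  by rewrite mulr_ge0 ?Yv_ge0 // mulr_ge0 // exprn_ge0.
have -> : \sum_v (if adj E u v && true then (1 : R) else 0) = (deg E u)%:R.
  rewrite (eq_bigr (fun v => if adj E u v then (1 : R) else 0)); last by move=> v _; rewrite andbT.
  by rewrite -big_mkcond /= deg_card -sumr_const.
rewrite Yv_deg -mulrA.
apply: (@le_trans _ _ (D%:R)); first by rewrite ler_nat ltnW.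
rewrite ler_peMr //; apply: pow2_ge1; exact: ltnW.
Qed.

Lemma EZ (R : realType) n (q : R) :
  \sum_(E : graph n | simple_graph E) er_weight q E * \sum_u Yv R u E
  = n%:R * (1 - q / 2) ^+ n.-1.
Proof.
under eq_bigr do rewrite mulr_sumr.
rewrite exchange_big /=.
under eq_bigr do rewrite EY.
by rewrite sumr_const card_ord mulr_natl.
Qed.

Lemma er_weight_ge0 (R : realType) n (q : R) (E : graph n) : 0 <= q <= 1 -> 0 <= er_weight q E.
Proof.
case/andP => q0 q1; rewrite er_weightE; apply: prodr_ge0 => x _.
by case: ifP => _ //; rewrite subr_ge0.
Qed.

Lemma prob_bound (R : realType) n k (eps delta q : R) (D : nat) :
  0 <= q <= 1 -> (0 < n)%N -> (0 < D)%N -> 0 < eps -> 0 < delta ->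
  k%:R < eps ^+ 2 * D%:R ->
  1 - D%:R * 2 ^+ D / delta * (1 - q / 2) ^+ n.-1 <=
  er_prob q (fun E : graph n => 1 - delta <= @small_rw_proportion R n k eps E).
Proof.
move=> q01 n0 D0 e0 d0 hk.
set P := (fun E : graph n => _).
have tot := @er_total R n q.
rewrite (bigID P) /= in tot.
rewrite /er_prob.
set S1 := \sum_(E | _ && P E) _ in tot *.
set S2 := \sum_(E | _ && ~~ P E) _ in tot.
have np : (0 : R) < n%:R by rewrite ltr0n.
pose c : R := D%:R * 2 ^+ D / (delta * n%:R).
have h2 : S2 <= c * (n%:R * (1 - q / 2) ^+ n.-1).
  rewrite -EZ mulr_sumr.
  apply: (@le_trans _ _ (\sum_(E : graph n | simple_graph E && ~~ P E)
      er_weight q E * (c * \sum_u Yv R u E))).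
    apply: ler_sum => E /andP [sE nP].
    rewrite ler_peMr ?er_weight_ge0 //.
    move: nP; rewrite /P /small_rw_proportion.
    match goal with |- context [ #|?S| ] =>
      have hb : n%:R - #|S|%:R <= D%:R * 2 ^+ D * \sum_u Yv R u E;
      [ apply: (@bad_bound R n E D (in_set S)) => v cv;
        rewrite /in_mem /mem /= /in_set asboolb;
        apply: (@rw_small R n k E v D eps) => // u a;
        by move/forallP: cv => /(_ u); rewrite a
      | move: hb; generalize #|S| => cnt hb ] end.
    set Z := \sum_u Yv R u E in hb *.
    rewrite -ltNge ltr_pdivrMr // => hlt.
    rewrite /c mulrAC ler_pdivlMr ?mulr_gt0 // mul1r.
    apply: le_trans hb; lra.
  have c0 : 0 <= c by rewrite /c divr_ge0 ?mulr_ge0 ?exprn_ge0 ?ler0n ?ltW.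
  rewrite [X in _ <= X](bigID P) /=; apply: ler_wpDl.
    apply: sumr_ge0 => E _; apply: mulr_ge0 => //.
    apply: mulr_ge0; first exact: er_weight_ge0.
    by apply: sumr_ge0 => u _; apply: Yv_ge0.
  by apply: ler_sum => E _; rewrite mulrCA.
have e : c * (n%:R * (1 - q / 2) ^+ n.-1) = D%:R * 2 ^+ D / delta * (1 - q / 2) ^+ n.-1.
  rewrite /c; field; rewrite ?lt0r_neq0 //.
rewrite e in h2.
lra.
Qed.

Local Open Scope classical_set_scope.
Lemma nearE (P : nat -> Prop) : (\forall n \near \oo, P n) -> exists N, forall n, (N <= n)%N -> P n.
Proof. case=> N _ HN; exists N => n hn; exact: HN. Qed.
Local Close Scope classical_set_scope.

Lemma archi (R : realType) (x : R) : exists N : nat, forall n, (N <= n)%N -> x < n%:R.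
Proof.
exists (Num.Def.archi_bound `|x|) => n hn.
have h := archi_boundP (normr_ge0 x).
apply: le_lt_trans (ler_norm x) _; apply: lt_le_trans h _; by rewrite ler_nat.
Qed.

Lemma prednR (R : realType) n : (1 <= n)%N -> (n.-1)%:R = n%:R - 1 :> R.
Proof. by case: n => //= n _; rewrite -[n.+1]addn1 natrD addrK. Qed.

Lemma grow (R : realType) (p : nat -> R) : (forall n, 0 <= p n <= 1) ->
  (density_regime p \/ root_regime p \/ log_regime p) ->
  forall M : R, exists N, forall n, (N <= n)%N -> M <= (n.-1)%:R * p n.
Proof.
move=> hp hreg M.
pose L := `|M|.
have L0 : 0 <= L by rewrite normr_ge0.
have ML : M <= L by rewrite ler_norm.
case: hreg => [[pt [pt0 hc]]|[[K [beta [K0 [b0 [b1 hn]]]]]|[K [K0 hn]]]].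
- have h2 : pt / 2 < pt by lra.
  have [N1 HN1] := nearE (cvgr_gt _ hc _ h2).
  have [N2 HN2] := archi (2 * L / pt + 1).
  exists (maxn (maxn N1 N2) 1) => n; rewrite !geq_max => /andP [/andP [h1 h2'] h3].
  have := HN1 n h1; have := HN2 n h2' => hn hpn.
  rewrite prednR //.
  have hA : 2 * L / pt < n%:R - 1 by lra.
  move: hA; rewrite ltr_pdivrMr // => hA.
  have hn1 : 0 <= n%:R - 1 :> R by rewrite subr_ge0 ler1n.
  apply: (@le_trans _ _ ((n%:R - 1) * (pt / 2))); last by apply: ler_wpM2l => //; apply: ltW.
  lra.
- have g0 : 0 < 1 - beta by lra.
  pose L' := (2 * L / K) `^ (1 - beta)^-1.
  have [N1 HN1] := nearE hn.
  have [N2 HN2] := archi L'.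
  exists (maxn (maxn N1 N2) 2) => n; rewrite !geq_max => /andP [/andP [h1 h2'] h3].
  rewrite (HN1 n h1) prednR ?(leq_trans _ h3) //.
  have n2 : (2 : R) <= n%:R by rewrite ler_nat.
  set A := n%:R `^ (- beta).
  have A0 : 0 <= A by apply: powR_ge0.
  have e1 : n%:R * A = n%:R `^ (1 - beta).
    by rewrite /A -[RHS]mulr_powRB1 ?ler0n // addrAC subrr add0r.
  have e2 : 2 * L / K <= n%:R `^ (1 - beta).
    have -> : 2 * L / K = L' `^ (1 - beta).
      rewrite /L' -powRrM mulVf ?powRr1 //; last by rewrite lt0r_neq0.
      by apply: divr_ge0; [lra | exact: ltW].
    apply: ge0_ler_powR; rewrite ?ltW //.
      by rewrite nnegrE powR_ge0.
      by rewrite nnegrE ler0n.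
    exact: (HN2 n h2').
  have e3 : (n%:R / 2) * (K * A) <= (n%:R - 1) * (K * A).
    apply: ler_wpM2r; [apply: mulr_ge0 => //; exact: ltW | lra].
  have e4 : K / 2 * (2 * L / K) <= K / 2 * n%:R `^ (1 - beta).
    by apply: ler_wpM2l => //; rewrite divr_ge0 ?ltW.
  have e5 : K / 2 * (2 * L / K) = L by field; rewrite lt0r_neq0.
  have e6 : (n%:R / 2) * (K * A) = K / 2 * n%:R `^ (1 - beta) by rewrite -e1; ring.
  lra.
- have [N1 HN1] := nearE hn.
  have [N2 HN2] := archi (expR (2 * L / K)).
  exists (maxn (maxn N1 N2) 2) => n; rewrite !geq_max => /andP [/andP [h1 h2'] h3].
  rewrite (HN1 n h1) prednR ?(leq_trans _ h3) //.
  have n2 : (2 : R) <= n%:R by rewrite ler_nat.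
  have np : (0 : R) < n%:R by lra.
  have hl : 2 * L / K <= ln n%:R.
    rewrite -[X in X <= _]expRK ler_ln ?posrE ?expR_gt0 //.
    exact: ltW (HN2 n h2').
  have e1 : (n%:R - 1) * (K * ln n%:R / n%:R) = ((n%:R - 1) / n%:R) * (K * ln n%:R).
    by field; rewrite lt0r_neq0.
  rewrite e1.
  have h12 : 1 / 2 <= (n%:R - 1) / n%:R :> R by rewrite ler_pdivlMr //; lra.
  have hK : 2 * L <= K * ln n%:R.
    by move: hl; rewrite ler_pdivrMr // (mulrC K).
  apply: (@le_trans _ _ (1 / 2 * (2 * L))); first lra.
  by apply: ler_pM => //; lra.
Qed.

Lemma bern (R : realType) (a : R) m : 0 <= a <= 1 -> (1 - a) ^+ m * (1 + m%:R * a) <= 1.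
Proof.
case/andP => a0 a1.
have hb : 1 + m%:R * a <= (1 + a) ^+ m.
  elim: m => [|m IH]; first by rewrite mul0r addr0 expr0.
  rewrite exprS -[m.+1]addn1 natrD.
  have h1 : 0 <= 1 + a by lra.
  apply: le_trans (ler_wpM2l h1 IH).
  have : 0 <= m%:R * a * a by rewrite !mulr_ge0 ?ler0n.
  lra.
apply: (@le_trans _ _ ((1 - a) ^+ m * (1 + a) ^+ m)).
  by apply: ler_wpM2l => //; rewrite exprn_ge0 // subr_ge0.
rewrite -exprMn; apply: exprn_ile1.
  by rewrite mulr_ge0 // ?subr_ge0; lra.
have : 0 <= a * a by rewrite mulr_ge0.
lra.
Qed.

Unset Implicit Arguments.

Theorem mainTheorem5 (R : realType) (p : nat -> R)
    (hp01 : forall n, 0 <= p n <= 1)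
    (hreg : density_regime p \/ root_regime p \/ log_regime p) :
  forall (k : nat) (eps delta theta : R), 0 < eps -> 0 < delta -> 0 < theta ->
  exists N : nat, forall n : nat, (N <= n)%N ->
    er_prob (p n) (fun E : graph n => 1 - delta <= small_rw_proportion k eps E)
      >= 1 - theta.
Proof.
move=> k eps delta theta e0 d0 t0.
pose D := (Num.Def.archi_bound (k%:R / eps ^+ 2 : R)).+1.
have D0 : (0 < D)%N by [].
have hk : k%:R < eps ^+ 2 * D%:R.
  have h := @archi_boundP R (k%:R / eps ^+ 2) (divr_ge0 (ler0n _ _) (exprn_ge0 _ (ltW e0))).
  have h2 : k%:R / eps ^+ 2 < D%:R by apply: lt_le_trans h _; rewrite ler_nat.
  by move: h2; rewrite ltr_pdivrMr ?exprn_gt0 // mulrC.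
pose C : R := D%:R * 2 ^+ D / delta.
have [N0 HN0] := grow hp01 hreg (2 * C / theta).
exists (maxn N0 2) => n; rewrite geq_max => /andP [h1 h2].
have q01 := hp01 n.
have n0 : (0 < n)%N by apply: leq_trans h2.
apply: le_trans (@prob_bound R n k eps delta (p n) D q01 n0 D0 e0 d0 hk).
have hM := HN0 n h1.
move: hM; rewrite ler_pdivrMr // => hM.
set m : R := (n.-1)%:R in hM *.
set X := (1 - p n / 2) ^+ n.-1.
have hb : X * (1 + m * (p n / 2)) <= 1.
  by apply: bern; case/andP: q01 => ? ?; apply/andP; split; lra.
have X0 : 0 <= X by rewrite exprn_ge0 //; case/andP: q01 => ? ?; lra.
have hC : C <= theta * (1 + m * (p n / 2)) by lra.
have h3 : C * X <= theta * (1 + m * (p n / 2)) * X by apply: ler_wpM2r.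
have h4 : theta * (1 + m * (p n / 2)) * X <= theta.
  by rewrite -mulrA; apply: ler_piMr; [exact: ltW | rewrite mulrC].
rewrite -/C; lra.
Qed.
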